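(* Let $P$ be a finite non-abelian exponent-critical $p$-group. Then $P=\langle a,b\rangle$ for some $a,b\in P$ with $a$ of maximal order in $P$ (i.e. of order $\exp(P)$). Moreover, $P$ is solvable of derived length $2$.
   Context: A finite group $G$ is exponent-critical if $\exp(G)$ is not the least common multiple of the exponents of the proper non-abelian subgroups of $G$. *)

(* Defs.v *)
From mathcomp Require Import all_boot all_fingroup all_solvable.
Set Implicit Arguments. Unset Strict Implicit. Unset Printing Implicit Defensive.
Import GroupScope.

Definition exponent_critical (gT : finGroupType) (G : {group gT}) : bool :=
  exponent G !=
    \big[lcmn/1%N]_(H : {group gT} | (H \proper G) && ~~ abelian H) exponent H.

(* Main.v *)
Require Import Defs.
From mathcomp Require Import all_boot all_fingroup all_solvable.
Import GroupScope.

Lemma crit_full (gT : finGroupType) (P H : {group gT}) :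
  exponent_critical P -> H \subset P -> ~~ abelian H ->
  exponent H = exponent P -> H :=: P.
Proof.
move=> crit sHP nabH eHP; case: (eqVproper sHP) => [//|prHP].
exfalso; move/negP: crit; apply; rewrite eqn_dvd; apply/andP; split.
  by rewrite -eHP; apply: (biglcmn_sup H) => //; rewrite prHP nabH.
by apply/dvdn_biglcmP => K /andP[/proper_sub sKP _]; exact: exponentS.
Qed.

Lemma full_sub (gT : finGroupType) (P H : {group gT}) (a : gT) :
  a \in H -> #[a] = exponent P -> H \subset P -> exponent H = exponent P.
Proof.
by move=> aH oa sHP; apply/eqP; rewrite eqn_dvd exponentS // -{1}oa dvdn_exponent.
Qed.

Lemma gen2_sub (gT : finGroupType) (P : {group gT}) a b :
  a \in P -> b \in P -> <<[set a; b]>> \subset P.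
Proof.
by move=> aP bP; rewrite gen_subG; apply/subsetP=> x /set2P[]->.
Qed.

Lemma gen2_nab (gT : finGroupType) (a b : gT) :
  b \notin 'C[a] -> ~~ abelian <<[set a; b]>>.
Proof.
move=> nc; apply/negP => /centsP ab; apply: (negP nc); apply/cent1P.
by apply: (ab b _ a); apply: mem_gen; rewrite !inE eqxx ?orbT.
Qed.

Lemma order_mulc (gT : finGroupType) (p : nat) (P : {group gT}) (x a : gT) :
  prime p -> p.-group P -> x \in P -> a \in P -> commute x a ->
  #[a] = exponent P -> #[x] != exponent P -> #[x * a] = exponent P.
Proof.
move=> pr pP xP aP cxa oa ox.
have eP : exponent P = (p ^ logn p (exponent P))%N.
  by rewrite -(p_part p) part_pnat_id // pnat_exponent.
move: eP; set n := logn p (exponent P) => eP.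
have xaP : x * a \in P by rewrite groupM.
have /(dvdn_pfactor _ _ pr) [m mn om] : (#[x] %| p ^ n)%N by rewrite -eP dvdn_exponent.
have /(dvdn_pfactor _ _ pr) [k kn ok] : (#[x * a] %| p ^ n)%N by rewrite -eP dvdn_exponent.
have mn1 : m < n.
  rewrite ltn_neqAle mn andbT; apply/eqP => mE.
  by move: ox; rewrite om eP mE eqxx.
have x1 : x ^+ (p ^ n.-1)%N = 1.
  by apply/eqP; rewrite -order_dvdn om dvdn_exp2l // -ltnS prednK // (leq_ltn_trans _ mn1).
have a1 : a ^+ (p ^ n.-1)%N != 1.
  rewrite -order_dvdn oa eP dvdn_Pexp2l ?prime_gt1 //.
  by rewrite -ltnS prednK ?ltnn // (leq_ltn_trans _ mn1).
rewrite ok eP; congr (_ ^ _)%N; apply/eqP; rewrite eqn_leq kn /=.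
rewrite leqNgt; apply/negP => kn1; move: a1.
have : (x * a) ^+ (p ^ n.-1)%N = 1.
  by apply/eqP; rewrite -order_dvdn ok dvdn_exp2l // -ltnS prednK // (leq_ltn_trans _ mn1).
rewrite expgMn // x1 mul1g => ->; by rewrite eqxx.
Qed.

Theorem mainTheorem11 (gT : finGroupType) (p : nat) (P : {group gT}) :
  prime p -> p.-group P -> ~~ abelian P -> exponent_critical P ->
  (exists a b : gT, [/\ a \in P, b \in P, P :=: <<[set a; b]>> &
                       #[a] = exponent P])
  /\ [/\ solvable P, P^`(1) != 1 & P^`(2) == 1].
Proof.
move=> pr pP nabP crit.
have [a aP oa] := exponent_witness (pgroup_nil pP).
have gen_ok : forall u v, u \in P -> v \in P -> v \notin 'C[u] ->
    #[u] = exponent P -> P :=: <<[set u; v]>>.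
  move=> u v uP vP nc ou; symmetry; apply: crit_full => //.
  - exact: gen2_sub.
  - exact: gen2_nab.
  - by apply: (@full_sub _ _ _ u) => //; [apply: mem_gen; rewrite !inE eqxx | exact: gen2_sub].
split.
  have [cPa | ] := boolP (P \subset 'C[a]); last first.
    case/subsetPn => b bP nb; exists a, b; split => //.
    exact: (gen_ok a b aP bP nb (esym oa)).
  move: (nabP); rewrite abelianE; case/subsetPn => x xP; rewrite -sub_cent1.
  case/subsetPn => y yP nyx.
  have [ox | ox] := eqVneq #[x] (exponent P).
    by exists x, y; split => //; exact: (gen_ok x y xP yP nyx ox).
  have cxa : commute x a by apply/cent1P; exact: (subsetP cPa _ xP).
  have oxa := @order_mulc _ p P x a pr pP xP aP cxa (esym oa) ox.
  exists (x * a), y; split => //; first by rewrite groupM.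
  have xaP : x * a \in P by rewrite groupM.
  apply: (gen_ok _ y xaP yP _ oxa).
  apply: contra nyx => /cent1P cy; apply/cent1P.
  have cay : commute a y by apply: esym; apply/cent1P; exact: (subsetP cPa _ yP).
  apply: (mulIg a); rewrite -mulgA cy -mulgA cay mulgA.
  done.
split; first exact: pgroup_sol pP.
  by rewrite (sameP eqP derG1P).
have saP : <[a]> \subset P by rewrite cycle_subG.
have [eaP | [M maxM saM]] := maximal_exists saP.
  by move: nabP; rewrite -eaP cycle_abelian.
have sMP : M \subset P := proper_sub (maxgroupp maxM).
have abM : abelian M.
  apply: contraT => nabM.
  have eM : M :=: P.
    apply: crit_full => //; apply: (@full_sub _ _ _ a).
    - by rewrite -cycle_subG.
    - exact: esym oa.
    - exact: sMP.
  by move: (maxgroupp maxM); rewrite eM properE subxx.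
have nMP := p_maximal_normal pP maxM.
have abQ : abelian (P / M).
  apply: cyclic_abelian; apply: prime_cyclic.
  by rewrite card_quotient ?normal_norm // (p_maximal_index pP maxM).
have dM := der1_min (normal_norm nMP) abQ.
apply/eqP/trivgP; apply: subset_trans (commgSS dM dM) _.
by rewrite -derg1 (derG1P abM).
Qed.
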